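(* Let $X$ be a univariate $L^2$-continuous stochastic process on a compact interval $\mathcal{T}$ with mean $\mu$ and covariance kernel $\kappa$, and let $(\lambda_i,\xi_i)$, $i=1,\dots,m$, be the $m$ largest eigenpairs of the integral operator with kernel $\kappa$, with $\lambda_m>0$. Let $\mathcal{T}=\mathcal{T}_1\cup\dots\cup\mathcal{T}_d$ with pairwise disjoint $\mathcal{T}_a$, $D=\{1,\dots,d\}$. For $R\subseteq D$ let $\hat X^R(t)=X(t)$ if $t\in\bigcup_{b\in R}\mathcal{T}_b$ and $\hat X^R(t)=\mu(t)$ otherwise, and for $a\in D$, $R\subseteq D\setminus\{a\}$, let $\Delta_{\mathcal{T}_a}\mathrm{fmd}^2(\hat X^R,\mu;\kappa,m)=\mathrm{fmd}^2(\hat X^{R\cup\{a\}},\mu;\kappa,m)-\mathrm{fmd}^2(\hat X^R,\mu;\kappa,m)$. Then $$\theta_{\mathcal{T}_a}(X,\mu;\kappa,m):=\sum_{R\subseteq D\setminus\{a\}}\frac{|R|!(d-|R|-1)!}{d!}\Delta_{\mathcal{T}_a}\mathrm{fmd}^2(\hat X^R,\mu;\kappa,m)=\sum_{i=1}^m\frac{1}{\lambda_i}\langle X-\mu,\xi_i\rangle_{\mathcal{T}_a}\langle X-\mu,\xi_i\rangle.$$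
   Context: $\langle f,g\rangle=\int_{\mathcal{T}}f(t)g(t)dt$ and $\langle f,g\rangle_{\mathcal{T}_a}=\int_{\mathcal{T}_a}f(t)g(t)dt$. The squared truncated functional Mahalanobis distance is $\mathrm{fmd}^2(Y,\mu;\kappa,m)=\sum_{i=1}^m\lambda_i^{-1}\langle Y-\mu,\xi_i\rangle^2$. *)

(* Defs.v *)
From HB Require Import structures.
From mathcomp Require Import all_boot all_order all_algebra.
From mathcomp Require Import all_classical all_reals all_analysis.
Set Implicit Arguments. Unset Strict Implicit. Unset Printing Implicit Defensive.
Import Order.TTheory GRing.Theory Num.Theory.
Import numFieldNormedType.Exports.
Local Open Scope classical_set_scope.
Local Open Scope ring_scope.

Section Defs.
Context {R : realType}.
Notation leb := (@lebesgue_measure R).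

Definition ip (A : set R) (f g : R -> R) : R :=
  Rintegral leb A (fun t => f t * g t).

Definition L2on (A : set R) (f : R -> R) : Prop :=
  measurable_fun A f /\ leb.-integrable A (fun t => (f t ^+ 2)%:E).

Definition fmd2 (T : set R) (m : nat) (lam : 'I_m -> R) (xi : 'I_m -> R -> R)
  (Y mu : R -> R) : R :=
  \sum_(i < m) (lam i)^-1 * (ip T (fun t => Y t - mu t) (xi i)) ^+ 2.

Definition Xhat (d : nat) (Tp : 'I_d -> set R) (S : {set 'I_d})
  (X mu : R -> R) : R -> R :=
  fun t => if `[< (\bigcup_(b in [set b | b \in S]) Tp b) t >] then X t else mu t.

Definition theta (T : set R) (m : nat) (lam : 'I_m -> R) (xi : 'I_m -> R -> R)
  (d : nat) (Tp : 'I_d -> set R) (a : 'I_d) (X mu : R -> R) : R :=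
  \sum_(S : {set 'I_d} | a \notin S)
     ((factorial #|S| * factorial (d - #|S| - 1))%:R / (factorial d)%:R) *
     (fmd2 T lam xi (Xhat Tp (a |: S) X mu) mu - fmd2 T lam xi (Xhat Tp S X mu) mu).

Context {dO : measure_display} {Omega : measurableType dO} (P : probability Omega R).

Definition mean (X : R -> Omega -> R) (t : R) : R := fine ('E_P[X t])%E.

Definition cov_kernel (X : R -> Omega -> R) (s t : R) : R :=
  fine (covariance P (X s) (X t)).

Definition L2_continuous (T : set R) (X : R -> Omega -> R) : Prop :=
  (forall t, T t -> X t \in Lfun P 2%:E) /\
  (forall t, T t ->
     (fun s => ('E_P[fun w => ((X s w - X t w) ^+ 2)%R])%E) @ within T (nbhs t)
       --> 0%E).

Definition int_op (T : set R) (kappa : R -> R -> R) (f : R -> R) : R -> R :=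
  fun s => Rintegral leb T (fun t => kappa s t * f t).

Definition eigenpair (T : set R) (kappa : R -> R -> R) (lam : R) (f : R -> R) : Prop :=
  L2on T f /\ ip T f f != 0 /\ forall s, T s -> int_op T kappa f s = lam * f s.

Definition largest_eigenpairs (T : set R) (kappa : R -> R -> R) (m : nat)
  (lam : 'I_m -> R) (xi : 'I_m -> R -> R) : Prop :=
  (forall i, eigenpair T kappa (lam i) (xi i)) /\
  (forall i j, ip T (xi i) (xi j) = (i == j)%:R) /\
  (forall i j : 'I_m, (i <= j)%N -> lam j <= lam i) /\
  (forall (l : R) (f : R -> R), eigenpair T kappa l f ->
     (forall i, ip T f (xi i) = 0) -> forall i, lam i >= l).

End Defs.

(* Main.v *)
Require Import Defs.
From HB Require Import structures.
From mathcomp Require Import all_boot all_order all_algebra.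
From mathcomp Require Import all_classical all_reals all_analysis.
From mathcomp Require Import measurable_realfun zify ring lra.
Import Order.TTheory GRing.Theory Num.Theory.
Import numFieldNormedType.Exports.
Local Open Scope classical_set_scope.
Local Open Scope ring_scope.

Local Close Scope classical_set_scope.
Set Implicit Arguments. Unset Strict Implicit.
Section Comb.
Variable R : numFieldType.
Definition wt (d k : nat) : R := ((factorial k * factorial (d - k - 1))%:R / (factorial d)%:R).

Lemma subC1 (T : finType) (S : {set T}) a : (S \subset [set~ a]) = (a \notin S).
Proof.
apply/fintype.subsetP/idP => [H|H x xS]; last by rewrite !inE; apply: contraNneq H => <-.
by apply/negP => /H; rewrite !inE eqxx.
Qed.

Lemma wsum n (a : 'I_n.+1) :
  \sum_(S : {set 'I_n.+1} | a \notin S) wt n.+1 #|S| = 1.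
Proof.
have cS : forall S : {set 'I_n.+1}, a \notin S -> (#|S| <= n)%N.
  move=> S aS; have : S \subset [set~ a] by apply/fintype.subsetP=> x xS; rewrite !inE; apply: contraNneq aS => <-.
  by move/subset_leq_card; rewrite cardsC1 card_ord.
rewrite (partition_big (fun S : {set 'I_n.+1} => (inord #|S| : 'I_n.+1)) xpredT) //=.
rewrite (eq_bigr (fun j : 'I_n.+1 => (n`!)%:R / (n.+1)`!%:R)).
  rewrite sumr_const card_ord -[_ *+ n.+1]mulr_natl mulrA -natrM -factS divff //; rewrite pnatr_eq0 -lt0n fact_gt0.
move=> j _.
rewrite (eq_bigl (fun S => S \in [set A : {set 'I_n.+1} | A \subset [set~ a] & #|A| == j])); last first.
  move=> S; rewrite !inE subC1; case aS: (a \in S) => //=.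
  have := cS S (negbT aS) => le.
  apply/eqP/eqP => [<-|->]; first by rewrite inordK.
  by apply: val_inj; rewrite /= inordK.
rewrite (eq_bigr (fun _ => wt n.+1 j)); last first.
  by move=> S; rewrite inE => /andP[_ /eqP ->].
rewrite sumr_const cards_draws cardsC1 card_ord /= /wt.
rewrite subn1 subSKn -[_ *+ 'C(n, j)]mulr_natl mulrA -natrM bin_fact //.
by rewrite -ltnS.
Qed.

Lemma whalf n (a b : 'I_n.+1) : b != a ->
  \sum_(S : {set 'I_n.+1} | (a \notin S) && (b \in S)) wt n.+1 #|S| = 2^-1.
Proof.
move=> ba.
pose B := [set~ a].
pose psi (S : {set 'I_n.+1}) := (S :\: B) :|: (B :\: S).
have psiK : involutive psi.
  by move=> S; apply/setP => x; rewrite !inE; case: (x == a); case: (x \in S).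
have inpsi x S : (x \in psi S) = (x \in S) (+) (x \in B).
  by rewrite !inE; case: (x == a); case: (x \in S).
have E : \sum_(S : {set 'I_n.+1} | (a \notin S) && (b \in S)) wt n.+1 #|S| =
         \sum_(S : {set 'I_n.+1} | (a \notin S) && (b \notin S)) wt n.+1 #|S|.
  rewrite (reindex_inj (can_inj psiK)) /=.
  apply: eq_big => S.
    by rewrite !inpsi !inE eqxx ba /=; case: (a \in S); case: (b \in S).
  move=> /andP[]; rewrite inpsi !inE eqxx addbF => aS _.
  have sSB : S \subset B by rewrite subC1.
  have -> : psi S = B :\: S.
    apply/setP => x; rewrite !inE; case xa: (x == a) => //=.
      by move/eqP: xa aS => -> /negbTE ->.
  rewrite cardsD (finset.setIidPr sSB) cardsC1 card_ord /=.
  have : (#|S| <= n)%N by move/subset_leq_card: sSB; rewrite cardsC1 card_ord.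
  move=> le; have e : (n.+1 - (n - #|S|) - 1 = #|S|)%N by lia.
  by rewrite /wt e mulnC subn1 subSKn.
have T1 := wsum a.
rewrite (bigID (fun S : {set 'I_n.+1} => b \in S)) /= -E in T1.
set x := \sum_(S | _) _ in T1 *.
rewrite -mulr2n -mulr_natl in T1.
have h : x = (2:R)^-1 * (2 * x) by rewrite mulKf // pnatr_eq0.
by rewrite h T1 mulr1.
Qed.
End Comb.

Section Main.
Variable R : numFieldType.
Lemma shapley_quad n m (a : 'I_n.+1) (lam : 'I_m -> R) (c : 'I_m -> 'I_n.+1 -> R) :
  \sum_(S : {set 'I_n.+1} | a \notin S) wt R n.+1 #|S| *
    (\sum_(i < m) (lam i)^-1 * (\sum_(b in a |: S) c i b) ^+ 2 -
     \sum_(i < m) (lam i)^-1 * (\sum_(b in S) c i b) ^+ 2) =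
  \sum_(i < m) (lam i)^-1 * c i a * \sum_b c i b.
Proof.
have hb : forall b, \sum_(S : {set 'I_n.+1} | a \notin S) wt R n.+1 #|S| * (b \in S)%:R =
    if b == a then 0 else 2^-1.
  move=> b; case: eqP => [->|/eqP ba].
    by apply: big1 => S /negbTE ->; rewrite mulr0.
  rewrite -(whalf R ba) big_mkcondr /=; apply: eq_bigr => S _.
  by case: (b \in S); rewrite ?mulr1 ?mulr0.
transitivity (\sum_(S : {set 'I_n.+1} | a \notin S) \sum_(i < m) wt R n.+1 #|S| *
   ((lam i)^-1 * (c i a ^+ 2 + 2 * c i a * \sum_b c i b * (b \in S)%:R))).
  apply: eq_bigr => S aS; rewrite -sumrB mulr_sumr; apply: eq_bigr => i _.
  rewrite big_setU1 //= -mulrBr; congr (_ * (_ * _)).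
  rewrite (big_mkcond (fun b => b \in S)) /=.
  have -> : \sum_b c i b * (b \in S)%:R = \sum_b (if b \in S then c i b else 0).
    by apply: eq_bigr => b _; case: (b \in S); rewrite ?mulr1 ?mulr0.
  ring.
rewrite exchange_big /=; apply: eq_bigr => i _.
transitivity ((lam i)^-1 * (c i a ^+ 2 * \sum_(S : {set 'I_n.+1} | a \notin S) wt R n.+1 #|S|
   + 2 * c i a * \sum_b c i b * \sum_(S : {set 'I_n.+1} | a \notin S) wt R n.+1 #|S| * (b \in S)%:R)).
  have -> : \sum_b c i b * \sum_(S : {set 'I_n.+1} | a \notin S) wt R n.+1 #|S| * (b \in S)%:R
     = \sum_(S : {set 'I_n.+1} | a \notin S) wt R n.+1 #|S| * \sum_b c i b * (b \in S)%:R.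
    under eq_bigr do rewrite mulr_sumr.
    rewrite exchange_big /=; apply: eq_bigr => S _; rewrite mulr_sumr.
    by apply: eq_bigr => b _; ring.
  rewrite !mulr_sumr -big_split /= mulr_sumr; apply: eq_bigr => S aS.
  ring.
rewrite wsum mulr1.
rewrite (eq_bigr (fun b => c i b * (if b == a then 0 else 2^-1))); last by move=> b _; rewrite -hb.
rewrite (bigD1 a) //= eqxx mulr0 add0r.
rewrite (eq_bigr (fun b => c i b * 2^-1)); last by move=> b /negbTE ->.
rewrite -mulr_suml [X in _ = _ * X](bigD1 a) //=.
set s := \sum_(b | b != a) c i b.
by rewrite -!mulrA; congr (_ * _); field.
Qed.
End Main.
Unset Implicit Arguments. Set Strict Implicit.
Local Open Scope classical_set_scope.
Local Open Scope ring_scope.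

Section S.
Context (R : realType) (dO : measure_display) (Omega : measurableType dO) (P : probability Omega R).
Lemma LfunB2 (X Y : Omega -> R) : X \in Lfun P 2%:E -> Y \in Lfun P 2%:E -> (X \- Y) \in Lfun P 2%:E.
Proof.
move=> hX hY.
have p1 : (1 <= (2%:E : \bar R))%E by rewrite lee_fin ler1n.
exact: (Lfun_addr_closed P p1).2 _ _ hX (Lfun_oppr_closed hY).
Qed.

Lemma mean_diff_sq (X : R -> Omega -> R) s t : X s \in Lfun P 2%:E -> X t \in Lfun P 2%:E ->
  (mean P X s - mean P X t) ^+ 2 <= fine ('E_P[fun w => ((X s w - X t w) ^+ 2)%R])%E.
Proof.
move=> hs ht.
have Pfin : P setT \is a fin_num := fin_num_measure P _ measurableT.
have hZ := LfunB2 _ _ hs ht.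
have hs1 := Lfun_subset12 Pfin hs.
have ht1 := Lfun_subset12 Pfin ht.
have fs := expectation_fin_num hs1.
have ft := expectation_fin_num ht1.
have hZ2 : (X s \- X t) \* (X s \- X t) \in Lfun P 1 := Lfun2_mul_Lfun1 hZ hZ.
have fZ2 := expectation_fin_num hZ2.
have V := variance_ge0 P (X s \- X t).
rewrite varianceE // expectationB // in V.
rewrite /mean -fineB // -lee_fin.
have E2 : ('E_P[(X s \- X t) ^+ 2] = 'E_P[fun w => ((X s w - X t w) ^+ 2)%R])%E.
  by congr expectation; apply: funext => w; rewrite /= expr2.
rewrite -E2.
have fZ2' : ('E_P[(X s \- X t) ^+ 2])%E \is a fin_num := fZ2.
move: V; rewrite -(fineK fs) -(fineK ft) -(fineK fZ2') -EFinB (_ : 0%E = 0%:E) // lee_fin.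
by rewrite lee_fin subr_ge0 -EFinB /= expr2.
Qed.

Lemma mean_cont (T : set R) (X : R -> Omega -> R) : L2_continuous P T X ->
  {within T, continuous (mean P X)}.
Proof.
move=> [L2 C].
rewrite continuous_subspace_in => t; rewrite inE => Tt.
rewrite /continuous_at.
have -> : nbhs (t : subspace T) = within T (nbhs t) by rewrite nbhs_subspace_in.
have /fine_cvgP [Cfin Cfine] := C t Tt.
have wF := within_filter T (nbhs_filter t).
apply/(cvgrPdist_lt (FF:=wF)) => e e0.
move/cvgrPdist_lt: Cfine => /(_ (e ^+ 2)) /(_ (exprn_gt0 2 e0)) H.
near=> s.
have Ts : T s by near: s; exact: near_withinT.
have lt : `|0 - fine ('E_P[fun w => ((X s w - X t w) ^+ 2)%R])%E| < e ^+ 2.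
  by near: s; exact: H.
rewrite /from_subspace.
have hsq := mean_diff_sq X s t (L2 s Ts) (L2 t Tt).
rewrite sub0r normrN in lt.
have vlt := le_lt_trans (ler_norm _) lt.
rewrite distrC ltNge; apply/negP => h.
have := ler_pM (ltW e0) (ltW e0) h h.
rewrite -normrM ger0_norm; last by rewrite -expr2 sqr_ge0.
rewrite expr2 in hsq vlt.
lra.
Unshelve. all: by end_near.
Qed.

End S.

Section Int.
Context (R : realType).
Notation leb := (@lebesgue_measure R).

Lemma decomp_U (d : nat) (Tp : 'I_d -> set R) (T : set R) (g : R -> R) :
 measurable (T : set (measurableTypeR R)) -> (forall b, measurable (Tp b : set (measurableTypeR R))) -> (forall b, Tp b `<=` T) ->
 (forall b c, b != c -> Tp b `&` Tp c = set0) ->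
 leb.-integrable T (EFin \o g) ->
 forall n (S : {set 'I_d}), #|S| = n ->
 measurable (\bigcup_(b in [set b | b \in S]) Tp b : set (measurableTypeR R)) /\
 (\bigcup_(b in [set b | b \in S]) Tp b) `<=` T /\
 Rintegral leb (\bigcup_(b in [set b | b \in S]) Tp b) g = \sum_(b in S) Rintegral leb (Tp b) g.
Proof.
move=> mT mTp sT dis ig; elim=> [|n IH] S cS.
  have -> : S = finset.set0 by apply/eqP; rewrite -cards_eq0 cS.
  have -> : \bigcup_(b in [set b | b \in (finset.set0 : {set 'I_d})]) Tp b = set0.
    by apply/seteqP; split => t //= [b] /=; rewrite inE.
  by rewrite big_set0 Rintegral_set0; split => //; split => // t.
have [x xS] : exists x, x \in S.
  by apply/set0Pn; rewrite -cards_eq0 cS.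
have cS' : #|S :\ x| = n by rewrite (cardsD1 x S) xS add1n in cS; case: cS.
have [mU [sU IU]] := IH _ cS'.
have E : \bigcup_(b in [set b | b \in S]) Tp b = Tp x `|` \bigcup_(b in [set b | b \in S :\ x]) Tp b.
  apply/seteqP; split => t /=.
    case=> b /= bS Tbt; case: (eqVneq b x) => [<-|bx]; first by left.
    by right; exists b => //=; rewrite !inE bx.
  case=> [Txt|[b /= + Tbt]]; first by exists x.
  by rewrite !inE => /andP[_ bS]; exists b.
have disj : [disjoint Tp x & \bigcup_(b in [set b | b \in S :\ x]) Tp b].
  apply/disj_set2P; apply/seteqP; split => t //= [Txt [b /=]].
  rewrite !inE => /andP[bx _] Tbt.
  by have /seteqP[h _] := dis b x bx; exact: (h t (conj Tbt Txt)).
rewrite E (big_setD1 x xS) /=; split; first exact: measurableU.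
split; first by move=> t [/sT|/sU].
have iU : leb.-integrable (Tp x `|` \bigcup_(b in [set b | b \in S :\ x]) Tp b) (EFin \o g).
  have mD : measurable (Tp x `|` \bigcup_(b in [set b | b \in S :\ x]) Tp b : set (measurableTypeR R)).
    exact: measurableU.
  have sD : (Tp x `|` \bigcup_(b in [set b | b \in S :\ x]) Tp b) `<=` T.
    by move=> t [/sT|/sU].
  exact: (integrableS mT mD sD ig).
by rewrite Rintegral_setU // IU.
Qed.

Lemma ip_hat (d : nat) (Tp : 'I_d -> set R) (T : set R) (Xw mu xi : R -> R) :
 measurable (T : set (measurableTypeR R)) -> (forall b, measurable (Tp b : set (measurableTypeR R))) -> (forall b, Tp b `<=` T) ->
 (forall b c, b != c -> Tp b `&` Tp c = set0) ->
 leb.-integrable T (EFin \o (fun t => (Xw t - mu t) * xi t)) ->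
 forall S : {set 'I_d},
 ip T (fun t => Xhat Tp S Xw mu t - mu t) xi = \sum_(b in S) ip (Tp b) (fun t => Xw t - mu t) xi.
Proof.
move=> mT mTp sT dis ig S.
have [mU [sU IU]] := @decomp_U d Tp T _ mT mTp sT dis ig _ S (erefl _).
rewrite /ip -IU -[in RHS](setIidr sU) Rintegral_mkcondr.
apply: eq_Rintegral => t _; rewrite /Xhat /patch.
case: asboolP => h.
  by rewrite ifT // inE.
by rewrite ifF ?subrr ?mul0r //; apply/negbTE; apply/negP; rewrite inE.
Qed.

Lemma integ_g (ta tb : R) (Xw mu xi : R -> R) (M : R) :
 L2on [set` `[ta, tb]] Xw -> L2on [set` `[ta, tb]] xi -> measurable_fun [set` `[ta, tb]] mu ->
 (forall t, [set` `[ta, tb]] t -> `|mu t| <= M) ->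
 leb.-integrable [set` `[ta, tb]] (EFin \o (fun t => (Xw t - mu t) * xi t)).
Proof.
move=> [mX iX] [mxi ixi] mmu bmu.
have mT : measurable ([set` `[ta, tb]] : set (measurableTypeR R)) by exact: measurable_itv.
have icst : leb.-integrable [set` `[ta, tb]] (EFin \o cst (M ^+ 2)).
  apply/integrableP; split; first by apply/measurable_EFinP; exact: measurable_cst.
  rewrite (_ : (fun x => _) = cst `|M ^+ 2|%:E); last by apply: funext.
  rewrite integral_cst //.
  have := lebesgue_measure_itv `[ta, tb]; rewrite /= => ->.
  by case: ifP => _; rewrite ?mule0 // -EFinB -EFinM ltry.
have ih : leb.-integrable [set` `[ta, tb]] (EFin \o (fun t => Xw t ^+ 2 + M ^+ 2 + xi t ^+ 2)).
  have := integrableD mT (integrableD mT iX icst) ixi.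
  by apply: (eq_integrable mT) => t _ /=; rewrite !EFinD.
apply: (le_integrable mT _ _ ih).
  apply/measurable_EFinP; apply: measurable_funM => //; exact: measurable_funB.
move=> t Tt /=; rewrite lee_fin.
have hm := bmu t Tt.
rewrite [X in _ <= X]ger0_norm; last by rewrite !addr_ge0 // sqr_ge0.
rewrite normrM.
have h1 : `|Xw t - mu t| ^+ 2 = (Xw t - mu t) ^+ 2 by rewrite real_normK // num_real.
have h2 : `|xi t| ^+ 2 = xi t ^+ 2 by rewrite real_normK // num_real.
have h3 : `|mu t| ^+ 2 = mu t ^+ 2 by rewrite real_normK // num_real.
set p := `|Xw t - mu t| in h1 *. set q := `|xi t| in h2 *.
have k1 : 2 * (p * q) <= p ^+ 2 + q ^+ 2.
  have := sqr_ge0 (p - q); rewrite sqrrB; lra.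
have k2 : (Xw t - mu t) ^+ 2 <= 2 * Xw t ^+ 2 + 2 * mu t ^+ 2.
  have := sqr_ge0 (Xw t + mu t); rewrite sqrrB sqrrD; lra.
have k3 : mu t ^+ 2 <= M ^+ 2.
  rewrite -h3 !expr2; apply: ler_pM => //; exact: normr_ge0.
have k4 := sqr_ge0 (xi t).
lra.
Qed.
End Int.

Theorem proposition1 (R : realType) (dO : measure_display) (Omega : measurableType dO)
  (P : probability Omega R) (ta tb : R) (X : R -> Omega -> R)
  (m : nat) (lam : 'I_m.+1 -> R) (xi : 'I_m.+1 -> R -> R)
  (d : nat) (Tp : 'I_d -> set R) (a : 'I_d) (w : Omega) :
  ta < tb ->
  (forall t, measurable_fun setT (X t)) ->
  L2_continuous P [set` `[ta, tb]] X ->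
  largest_eigenpairs [set` `[ta, tb]] (cov_kernel P X) lam xi ->
  0 < lam ord_max ->
  (forall b, measurable (Tp b)) ->
  [set` `[ta, tb]] = \bigcup_(b in setT) Tp b ->
  (forall b c, b != c -> Tp b `&` Tp c = set0) ->
  L2on [set` `[ta, tb]] (fun t => X t w) ->
  theta [set` `[ta, tb]] lam xi Tp a (fun t => X t w) (mean P X) =
  \sum_(i < m.+1) (lam i)^-1 *
     ip (Tp a) (fun t => X t w - mean P X t) (xi i) *
     ip [set` `[ta, tb]] (fun t => X t w - mean P X t) (xi i).
Proof.
move: Tp a; case: d => [|n] Tp a; first by case: a.
move=> hab mX L2c [eig _] _ mTp Tcov dis L2w.
set T := [set` `[ta, tb]].
set mu := mean P X.
set Xw := fun t => X t w.
have cmu : {within T, continuous mu} := mean_cont _ _ _ P T X L2c.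
have mT : measurable (T : set (measurableTypeR R)) by exact: measurable_itv.
have mT0 : measurable T by exact: measurable_itv.
have mmu : measurable_fun T mu := subspace_continuous_measurable_fun mT0 cmu.
have [c1 c1T max1] := EVT_max (ltW hab) cmu.
have [c2 c2T min2] := EVT_min (ltW hab) cmu.
have bnd : forall t, T t -> `|mu t| <= `|mu c1| + `|mu c2|.
  move=> t Tt; have h1 := max1 t Tt; have h2 := min2 t Tt.
  have e1 := ler_norm (mu c1); have e2 := ler_norm (- mu c2); rewrite normrN in e2.
  have n1 := normr_ge0 (mu c1); have n2 := normr_ge0 (mu c2).
  by rewrite ler_norml; apply/andP; split; lra.
have sT : forall b, Tp b `<=` T by move=> b t Tbt; rewrite /T Tcov; exists b.
have mTp' : forall b, measurable (Tp b : set (measurableTypeR R)) := mTp.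
have ig : forall i, (@lebesgue_measure R).-integrable T (EFin \o (fun t => (Xw t - mu t) * xi i t)).
  by move=> i; exact: (integ_g _ ta tb Xw mu (xi i) _ L2w (eig i).1 mmu bnd).
set c := fun i b => ip (Tp b) (fun t => Xw t - mu t) (xi i).
have E : forall S, fmd2 T lam xi (Xhat Tp S Xw mu) mu =
    \sum_(i < m.+1) (lam i)^-1 * (\sum_(b in S) c i b) ^+ 2.
  move=> S; apply: eq_bigr => i _.
  by rewrite (ip_hat R _ Tp T Xw mu (xi i) mT mTp' sT dis (ig i) S).
have F : forall i, ip T (fun t => X t w - mu t) (xi i) = \sum_b c i b.
  move=> i; transitivity (ip T (fun t => Xhat Tp [set: 'I_n.+1]%SET Xw mu t - mu t) (xi i)).
    apply: eq_Rintegral => t; rewrite inE => Tt; rewrite /Xhat asboolT //.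
    by move: Tt; rewrite /T Tcov => -[b _ Tbt]; exists b => //=; rewrite finset.in_setT.
  rewrite (ip_hat R n.+1 Tp T Xw mu (xi i) mT mTp' sT dis (ig i)).
  by apply: eq_bigl => b; rewrite finset.in_setT.
rewrite /theta; under eq_bigr do rewrite !E.
rewrite (eq_bigr (fun i => (lam i)^-1 * c i a * \sum_b c i b)); last by move=> i _; rewrite F.
exact: shapley_quad.
Qed.
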